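(* For all sufficiently large $R$ the following holds. Let $V\subset\mathcal D_R$ be finite, $G_V$ the graph on $V$ in which distinct points are adjacent iff their hyperbolic distance is at most $R$, and let $N(T)$ and $D_{i,j}$ be computed from $V$. For every admissible $(i,j)$, the subgraph of $G_V$ induced by the points of $V$ lying in tiles below $T_{i,j}$ (including $T_{i,j}$) can be covered by at most $D_{i,j}+1$ vertex-disjoint cycles and isolated vertices. Moreover, if $i>0$ and $D_{i,j}=0$, then this subgraph can be covered by exactly one cycle, and this cycle has at least one edge with both endpoints in $T_{i,j}$.
   Context: $\mathcal D_R$ is the hyperbolic disk (curvature $-1$) of radius $R$ around the origin, with polar coordinates $(r,\theta)$, $r\in[0,R)$, $\theta\in(0,2\pi]$. Tiling: $i_{\max}=\lceil 0.9R/(2\ln 2)\rceil$, $n_i=2^{4-i+\lfloor R/(2\ln 2)\rfloor}$ for integers $0\le i\le i_{\max}$; $(i,j)$ is admissible if $0\le i\le i_{\max}$, $0\le j<n_i$; $T_{i,j}=\{(r,\theta)\in\mathcal D_R:\ R-2(i+1)\ln 2\le r<R-2i\ln 2,\ 2\pi j/n_i<\theta\le 2\pi(j+1)/n_i\}$. A tile $T_{i',j'}$ is below $T_{i,j}$ if $i'\le i$ and $T_{i',j'}$ is contained in the sector $\{(r,\theta): 2\pi j/n_i<\theta\le 2\pi(j+1)/n_i\}$. For a point set $V$, $N(T_{i,j})=|V\cap T_{i,j}|$. Demands: $D_{0,j}=N(T_{0,j})$ if $N(T_{0,j})\in\{1,2\}$ and $D_{0,j}=0$ otherwise; for $0<i\le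 i_{\max}$, $D_{i,j}=\max\{D_{i-1,2j}+D_{i-1,2j+1}+3-N(T_{i,j}),0\}$. A graph $H$ is covered by $k$ vertex-disjoint cycles and isolated vertices if its vertex set can be partitioned into $k$ parts, each either a single vertex or the vertex set of a cycle (of length at least $3$) in $H$. *)

(* Defs.v *)
From Stdlib Require Import Reals Lra Lia ZArith Arith List Permutation.
Import ListNotations.
Open Scope R_scope.

(* A point of the hyperbolic plane in polar coordinates (r, theta). *)
Definition pt : Type := (R * R)%type.

Definition floorR (x : R) : Z := Int_part x.
Definition ceilR (x : R) : Z := (- Int_part (- x))%Z.

(* Point of D_R with canonical polar coordinates r in [0,R), theta in (0,2pi];
   the origin is represented with theta = 2pi. *)
Definition in_disk (Rad : R) (p : pt) : Prop :=
  0 <= fst p < Rad /\ 0 < snd p <= 2 * PI /\ (fst p = 0 -> snd p = 2 * PI).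

(* Hyperbolic distance (curvature -1) in polar coordinates:
   d = arcosh (cosh r1 cosh r2 - sinh r1 sinh r2 cos(theta1 - theta2)). *)
Definition arcosh (c : R) : R := ln (c + sqrt (c * c - 1)).
Definition hdist (p q : pt) : R :=
  arcosh (cosh (fst p) * cosh (fst q)
          - sinh (fst p) * sinh (fst q) * cos (snd p - snd q)).

Definition i_max (Rad : R) : Z := ceilR (0.9 * Rad / (2 * ln 2)).
Definition n_i (Rad : R) (i : nat) : R :=
  powerRZ 2 (4 - Z.of_nat i + floorR (Rad / (2 * ln 2)))%Z.

Definition admissible (Rad : R) (i j : nat) : Prop :=
  (Z.of_nat i <= i_max Rad)%Z /\ INR j < n_i Rad i.

Definition in_sector (Rad : R) (i j : nat) (p : pt) : Prop :=
  2 * PI * INR j / n_i Rad i < snd p <= 2 * PI * (INR j + 1) / n_i Rad i.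

Definition in_tile (Rad : R) (i j : nat) (p : pt) : Prop :=
  in_disk Rad p /\
  Rad - 2 * (INR i + 1) * ln 2 <= fst p < Rad - 2 * INR i * ln 2 /\
  in_sector Rad i j p.

Definition leb (x y : R) : bool := if Rle_dec x y then true else false.
Definition ltb (x y : R) : bool := if Rlt_dec x y then true else false.
Definition eqbR (x y : R) : bool := if Req_EM_T x y then true else false.

Definition in_tile_b (Rad : R) (i j : nat) (p : pt) : bool :=
  leb 0 (fst p) && ltb (fst p) Rad && ltb 0 (snd p) && leb (snd p) (2 * PI) &&
  implb (eqbR (fst p) 0) (eqbR (snd p) (2 * PI)) &&
  leb (Rad - 2 * (INR i + 1) * ln 2) (fst p) && ltb (fst p) (Rad - 2 * INR i * ln 2) &&
  ltb (2 * PI * INR j / n_i Rad i) (snd p) &&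
  leb (snd p) (2 * PI * (INR j + 1) / n_i Rad i).

(* N(T_{i,j}) = |V ∩ T_{i,j}| (V given as a duplicate-free list) *)
Definition Ncount (Rad : R) (V : list pt) (i j : nat) : Z :=
  Z.of_nat (length (filter (in_tile_b Rad i j) V)).

Fixpoint Dem (Rad : R) (V : list pt) (i j : nat) : Z :=
  match i with
  | O => let n := Ncount Rad V 0 j in
         if orb (Z.eqb n 1) (Z.eqb n 2) then n else 0%Z
  | S i' => Z.max (Dem Rad V i' (2 * j) + Dem Rad V i' (2 * j + 1) + 3
                   - Ncount Rad V (S i') j)%Z 0%Z
  end.

Definition below (Rad : R) (i' j' i j : nat) : Prop :=
  (i' <= i)%nat /\ admissible Rad i' j' /\
  (forall q : pt, in_tile Rad i' j' q -> in_sector Rad i j q).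

Definition in_below (Rad : R) (i j : nat) (p : pt) : Prop :=
  exists i' j', below Rad i' j' i j /\ in_tile Rad i' j' p.

Definition adjG (Rad : R) (p q : pt) : Prop := p <> q /\ hdist p q <= Rad.

Definition is_cycle (adj : pt -> pt -> Prop) (c : list pt) : Prop :=
  (3 <= length c)%nat /\
  forall k, (k < length c)%nat ->
    adj (nth k c (0, 0)) (nth ((k + 1) mod length c) c (0, 0)).

Definition part_ok (adj : pt -> pt -> Prop) (c : list pt) : Prop :=
  (exists v, c = [v]) \/ is_cycle adj c.

Definition covered_by (adj : pt -> pt -> Prop) (W : list pt) (k : nat) : Prop :=
  exists parts : list (list pt),
    length parts = k /\ Permutation (concat parts) W /\ Forall (part_ok adj) parts.

Definition W_below (Rad : R) (V : list pt) (i j : nat) (W : list pt) : Prop :=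
  NoDup W /\ (forall p, In p W <-> (In p V /\ in_below Rad i j p)).

(* Main.v *)
Require Import Defs.
From Stdlib Require Import Reals ZArith Arith List Permutation.
From Stdlib Require Import Lra Lia ClassicalEpsilon.
Import ListNotations.
Open Scope R_scope.

Section Comb.
Variable g : pt -> pt -> Prop.
Let adj := fun p q => p <> q /\ g p q.
Local Notation d0 := ((0%R,0%R) : pt).

Fixpoint chain (l : list pt) : Prop :=
  match l with
  | x :: ((y :: _) as t) => g x y /\ chain t
  | _ => True
  end.

Lemma chain_nth : forall l, chain l ->
  forall k, (S k < length l)%nat -> g (nth k l d0) (nth (S k) l d0).
Proof.
  induction l as [|x l IH]; simpl; intros H k Hk; [lia|].
  destruct l as [|y l]; simpl in *; [lia|].
  destruct H as [H1 H2]. destruct k as [|k]; [exact H1|].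
  apply (IH H2 k). simpl. lia.
Qed.

Lemma nth_chain : forall l,
  (forall k, (S k < length l)%nat -> g (nth k l d0) (nth (S k) l d0)) -> chain l.
Proof.
  induction l as [|x l IH]; simpl; intros H; [exact I|].
  destruct l as [|y l]; [exact I|]. split.
  - apply (H 0%nat). simpl; lia.
  - apply IH. intros k Hk. apply (H (S k)). simpl in *; lia.
Qed.

Lemma chain_app : forall l1 l2, chain l1 -> chain l2 ->
  (l1 = [] \/ l2 = [] \/ g (last l1 d0) (hd d0 l2)) -> chain (l1 ++ l2).
Proof.
  induction l1 as [|x l1 IH]; simpl; intros l2 H1 H2 H3; [exact H2|].
  destruct l1 as [|y l1].
  - simpl. destruct l2 as [|z l2]; [exact I|]. split; [|exact H2].
    destruct H3 as [H3|[H3|H3]]; [discriminate|discriminate|exact H3].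
  - destruct H1 as [Hxy H1]. simpl. split; [exact Hxy|].
    apply (IH l2 H1 H2). destruct H3 as [H3|[H3|H3]]; [discriminate|auto|].
    right; right. exact H3.
Qed.

Lemma chain_all : forall l, (forall x y, In x l -> In y l -> g x y) -> chain l.
Proof.
  induction l as [|x l IH]; simpl; intros H; [exact I|].
  destruct l as [|y l]; [exact I|]. split.
  - apply H; simpl; auto.
  - apply IH. intros a b Ha Hb. apply H; right; auto.
Qed.

Lemma last_nth : forall (l : list pt), last l d0 = nth (length l - 1) l d0.
Proof.
  induction l as [|x l IH]; [reflexivity|].
  destruct l as [|y l]; [reflexivity|].
  change (last (x :: y :: l) d0) with (last (y :: l) d0).
  rewrite IH. simpl. replace (length l - 0)%nat with (length l) by lia. reflexivity.
Qed.

Lemma cycle_of_chain : forall c, NoDup c -> (3 <= length c)%nat ->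
  chain (c ++ [hd d0 c]) -> is_cycle adj c.
Proof.
  intros c Hnd Hl Hch. split; [exact Hl|]. intros k Hk.
  pose proof (chain_nth _ Hch k) as Hg. rewrite length_app in Hg. simpl in Hg.
  specialize (Hg ltac:(lia)).
  rewrite app_nth1 in Hg by lia.
  destruct (Nat.lt_ge_cases (S k) (length c)) as [Hs|Hs].
  - rewrite app_nth1 in Hg by lia.
    rewrite Nat.mod_small by lia. replace (k+1)%nat with (S k) by lia.
    split; [|exact Hg]. intro He.
    apply (proj1 (NoDup_nth c d0) Hnd k (S k)) in He; lia.
  - assert (S k = length c) by lia.
    rewrite app_nth2 in Hg by lia. replace (S k - length c)%nat with 0%nat in Hg by lia.
    simpl in Hg.
    replace ((k+1) mod length c)%nat with 0%nat.
    2:{ replace (k+1)%nat with (length c) by lia. rewrite Nat.Div0.mod_same; lia. }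
    assert (Hh : hd d0 c = nth 0 c d0) by (destruct c; reflexivity).
    rewrite <- Hh. split; [|exact Hg]. intro He. rewrite Hh in He.
    apply (proj1 (NoDup_nth c d0) Hnd k 0%nat) in He; lia.
Qed.

Lemma part_chain : forall P, part_ok adj P -> P <> [] /\ chain P.
Proof.
  intros P [[v ->]|[Hl Hc]].
  - split; [discriminate|exact I].
  - split; [intro; subst; simpl in Hl; lia|].
    apply nth_chain. intros k Hk. specialize (Hc k ltac:(lia)).
    rewrite Nat.mod_small in Hc by lia. replace (k+1)%nat with (S k) in Hc by lia.
    apply Hc.
Qed.

Lemma last_app' : forall (l1 l2 : list pt), l2 <> [] -> last (l1 ++ l2) d0 = last l2 d0.
Proof.
  induction l1 as [|x l1 IH]; intros l2 H; [reflexivity|].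
  rewrite <- (IH l2 H). simpl.
  destruct (l1 ++ l2) eqn:E; [|reflexivity].
  apply app_eq_nil in E. destruct E; contradiction.
Qed.

Lemma last_In' : forall (l : list pt), l <> [] -> In (last l d0) l.
Proof.
  induction l as [|x l IH]; intros H; [contradiction|].
  destruct l as [|y l]; [left; reflexivity|].
  right. apply IH. discriminate.
Qed.

Fixpoint weave (h : list pt) (Ps : list (list pt)) : list pt :=
  match h, Ps with
  | x :: h', P :: Ps' => x :: P ++ weave h' Ps'
  | _, [] => h
  | [], _ :: _ => []
  end.

Lemma weave_perm : forall h Ps, (length Ps <= length h)%nat ->
  Permutation (weave h Ps) (h ++ concat Ps).
Proof.
  induction h as [|x h IH]; intros Ps Hl; destruct Ps as [|P Ps]; simpl in *;
    try (rewrite ?app_nil_r; reflexivity); try lia.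
  apply perm_skip. rewrite (IH Ps ltac:(lia)).
  apply Permutation_app_swap_app.
Qed.

Lemma weave_hd : forall h Ps, hd d0 (weave h Ps) = hd d0 h.
Proof. intros [|x h] [|P Ps]; reflexivity. Qed.

Lemma weave_last : forall h Ps, (length Ps < length h)%nat ->
  last (weave h Ps) d0 = last h d0.
Proof.
  induction h as [|x h IH]; intros Ps Hl; destruct Ps as [|P Ps]; simpl in *; try lia;
    [reflexivity|].
  destruct h as [|y h]; simpl in Hl; [lia|].
  specialize (IH Ps ltac:(simpl; lia)).
  assert (Hne : weave (y :: h) Ps <> []) by (destruct Ps; discriminate).
  assert (E : last ((x :: P) ++ weave (y :: h) Ps) d0 = last (y :: h) d0)
    by (rewrite last_app' by exact Hne; exact IH).
  exact E.
Qed.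

Lemma weave_chain : forall h Ps, (length Ps < length h)%nat ->
  (forall P, In P Ps -> P <> [] /\ chain P) ->
  (forall x y, In x h -> In y (h ++ concat Ps) -> g x y /\ g y x) ->
  chain (weave h Ps).
Proof.
  induction h as [|x h IH]; intros Ps Hl HP Hh; destruct Ps as [|P Ps]; simpl in Hl; try lia.
  - change (chain (x :: h)). apply chain_all. intros a b Ha Hb. apply (Hh a b Ha). rewrite app_nil_r. exact Hb.
  - destruct h as [|y h]; simpl in Hl; [lia|].
    destruct (HP P (or_introl eq_refl)) as [HPne HPc].
    assert (Hrest : chain (weave (y :: h) Ps)).
    { apply IH; [simpl; lia| intros Q HQ; apply HP; right; exact HQ|].
      intros a b Ha Hb. apply Hh; [right; exact Ha|].
      right. rewrite in_app_iff in Hb |- *. destruct Hb as [Hb|Hb]; [left; exact Hb|].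
      right. simpl. apply in_app_iff. right. exact Hb. }
    destruct P as [|p P]; [contradiction|].
    change (g x p /\ chain ((p :: P) ++ weave (y :: h) Ps)). split.
    + apply (Hh x p (or_introl eq_refl)). right. apply in_app_iff. right.
      simpl. left. reflexivity.
    + apply chain_app; [exact HPc|exact Hrest|].
      right; right. rewrite weave_hd. simpl.
      apply (Hh y (last (p :: P) d0) (or_intror (or_introl eq_refl))).
      apply in_app_iff. right. change (In (last (p :: P) d0) ((p :: P) ++ concat Ps)).
      apply in_app_iff. left. apply last_In'. discriminate.
Qed.


Lemma Forall_skipn' : forall (A : Type) (P : A -> Prop) n l, Forall P l -> Forall P (skipn n l).
Proof.
  induction n as [|n IH]; intros l H; [exact H|]. destruct l as [|a l]; [constructor|].
  simpl. inversion H; subst. apply IH; assumption.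
Qed.

Lemma in_concat_firstn : forall t (Ps : list (list pt)) y,
  In y (concat (firstn t Ps)) -> In y (concat Ps).
Proof.
  intros t Ps y H. rewrite <- (firstn_skipn t Ps). rewrite concat_app.
  apply in_app_iff. left. exact H.
Qed.

Lemma big_cycle : forall H Ps t, NoDup (H ++ concat Ps) -> Forall (part_ok adj) Ps ->
  (forall x y, In x H -> In y (H ++ concat Ps) -> g x y /\ g y x) ->
  (t < length H)%nat ->
  let c := weave H (firstn t Ps) in
  (3 <= length c)%nat ->
  Permutation c (H ++ concat (firstn t Ps)) /\ is_cycle adj c /\
  (exists k, (k < length c)%nat /\ In (nth k c d0) H /\ In (nth ((k+1) mod length c) c d0) H).
Proof.
  intros H Ps t Hnd HF Hh Ht c Hc.
  assert (HlF : (length (firstn t Ps) < length H)%nat).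
  { rewrite length_firstn. lia. }
  assert (Hperm : Permutation c (H ++ concat (firstn t Ps))) by (apply weave_perm; lia).
  assert (HHne : H <> []) by (intro E; subst; simpl in Ht; lia).
  assert (Hlast : last c d0 = last H d0) by (apply weave_last; exact HlF).
  assert (Hhd : hd d0 c = hd d0 H) by apply weave_hd.
  assert (HinH1 : In (last H d0) H) by (apply last_In'; exact HHne).
  assert (HinH2 : In (hd d0 H) H) by (destruct H; [contradiction|left; reflexivity]).
  split; [exact Hperm|]. split.
  - apply cycle_of_chain; [|exact Hc|].
    + apply (Permutation_NoDup (Permutation_sym Hperm)).
      rewrite <- (firstn_skipn t Ps), concat_app, app_assoc in Hnd.
      exact (NoDup_app_remove_r _ _ Hnd).
    + apply chain_app.
      * apply weave_chain; [exact HlF| |].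
        -- intros P HP. apply part_chain. rewrite Forall_forall in HF. apply HF.
           rewrite <- (firstn_skipn t Ps). apply in_app_iff. left. exact HP.
        -- intros x y Hx Hy. apply Hh; [exact Hx|]. apply in_app_iff in Hy.
           apply in_app_iff. destruct Hy as [Hy|Hy]; [left; exact Hy|right].
           exact (in_concat_firstn t Ps y Hy).
      * exact I.
      * right; right. rewrite Hlast. simpl. rewrite Hhd.
        apply (Hh (hd d0 H) (last H d0) HinH2). apply in_app_iff. left. exact HinH1.
  - exists (length c - 1)%nat. split; [lia|]. split.
    + rewrite <- last_nth. rewrite Hlast. exact HinH1.
    + replace ((length c - 1 + 1) mod length c)%nat with 0%nat.
      * assert (E : nth 0 c d0 = hd d0 c) by (destruct c; reflexivity).
        rewrite E, Hhd. exact HinH2.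
      * replace (length c - 1 + 1)%nat with (length c) by lia.
        rewrite Nat.Div0.mod_same. reflexivity.
Qed.

Lemma merge : forall H Ps, NoDup (H ++ concat Ps) -> Forall (part_ok adj) Ps ->
  (forall x y, In x H -> In y (H ++ concat Ps) -> g x y /\ g y x) ->
  (exists k, covered_by adj (H ++ concat Ps) k /\ (k <= length Ps + length H)%nat /\
    (k + length H <= length Ps + 2 \/ k <= 1 \/ (length H = 2 /\ length Ps = 0 /\ k <= 2))%nat) /\
  ((length Ps < length H)%nat -> (3 <= length H)%nat ->
    exists c, Permutation c (H ++ concat Ps) /\ is_cycle adj c /\
      exists k, (k < length c)%nat /\ In (nth k c d0) H /\ In (nth ((k+1) mod length c) c d0) H).
Proof.
  intros H Ps Hnd HF Hh.
  assert (Hbig : (2 <= length H)%nat -> (3 <= length H \/ 1 <= length Ps)%nat ->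
    (3 <= length (weave H (firstn (length H - 1) Ps)))%nat).
  { intros H2 H3.
    assert (HL : (length (firstn (length H - 1) Ps) <= length H)%nat) by (rewrite length_firstn; lia).
    rewrite (Permutation_length (weave_perm H (firstn (length H - 1) Ps) HL)).
    rewrite length_app. destruct H3 as [H3|H3]; [lia|].
    destruct Ps as [|P Ps]; simpl in H3; [lia|].
    replace (length H - 1)%nat with (S (length H - 2)) by lia. simpl.
    rewrite length_app. inversion HF; subst.
    destruct (part_chain P ltac:(assumption)) as [HP _]. destruct P; [contradiction|].
    simpl. lia. }
  split.
  - destruct H as [|x1 [|x2 [|x3 H]]].
    + exists (length Ps). split; [|simpl; lia].
      exists Ps. split; [reflexivity|]. split; [reflexivity|exact HF].
    + exists (S (length Ps)). split; [|simpl; lia].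
      exists ([x1] :: Ps). split; [reflexivity|]. split; [reflexivity|].
      constructor; [left; exists x1; reflexivity|exact HF].
    + destruct Ps as [|P Ps].
      * exists 2%nat. split; [|simpl; lia].
        exists [[x1];[x2]]. split; [reflexivity|]. split; [simpl; reflexivity|].
        constructor; [left; exists x1; reflexivity|constructor; [left; exists x2; reflexivity|constructor]].
      * set (t := (length [x1; x2] - 1)%nat).
        destruct (big_cycle [x1;x2] (P :: Ps) t Hnd HF Hh ltac:(unfold t; simpl; lia)
          (Hbig ltac:(simpl; lia) ltac:(simpl; lia))) as [Hp [Hcy _]].
        exists (S (length (skipn t (P :: Ps)))). split.
        -- exists (weave [x1;x2] (firstn t (P::Ps)) :: skipn t (P :: Ps)). split; [reflexivity|]. split.
           ++ refine (Permutation_trans (Permutation_app_tail (concat (skipn t (P::Ps))) Hp) _).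
              rewrite <- app_assoc, <- concat_app, firstn_skipn. reflexivity.
           ++ constructor; [right; exact Hcy|]. apply Forall_skipn'. exact HF.
        -- rewrite length_skipn. simpl length. unfold t. simpl. lia.
    + set (HH := x1 :: x2 :: x3 :: H). set (t := (length HH - 1)%nat).
      destruct (big_cycle HH Ps t Hnd HF Hh ltac:(unfold t, HH; simpl; lia)
          (Hbig ltac:(unfold HH; simpl; lia) ltac:(left; unfold HH; simpl; lia))) as [Hp [Hcy _]].
      exists (S (length (skipn t Ps))). split.
      * exists (weave HH (firstn t Ps) :: skipn t Ps). split; [reflexivity|]. split.
        -- refine (Permutation_trans (Permutation_app_tail (concat (skipn t Ps)) Hp) _).
           rewrite <- app_assoc, <- concat_app, firstn_skipn. reflexivity.
        -- constructor; [right; exact Hcy|]. apply Forall_skipn'. exact HF.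
      * rewrite length_skipn. unfold t, HH. simpl length. lia.
  - intros Hlt H3. set (t := (length H - 1)%nat).
    destruct (big_cycle H Ps t Hnd HF Hh ltac:(unfold t; lia)
          (Hbig ltac:(lia) ltac:(left; lia))) as [Hp [Hcy Hk]].
    rewrite firstn_all2 in Hp, Hcy, Hk by (unfold t; lia).
    exists (weave H Ps). split; [exact Hp|]. split; [exact Hcy|exact Hk].
Qed.

End Comb.


Lemma Lpos : 0 < ln 2.
Proof. rewrite <- ln_1. apply ln_increasing; lra. Qed.

Lemma Llt1 : ln 2 < 1.
Proof.
  rewrite <- (ln_exp 1). apply ln_increasing; [lra|].
  pose proof (exp_ineq1 1 ltac:(lra)). lra.
Qed.

Lemma exp_L : exp (ln 2) = 2.
Proof. apply exp_ln. lra. Qed.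

Lemma sin_sq : forall y, sin y * sin y <= y * y.
Proof.
  assert (Hpos : forall y, 0 <= y -> sin y * sin y <= y * y).
  { intros y Hy. destruct (Req_dec y 0) as [->|Hy0]; [rewrite sin_0; lra|].
    pose proof (sin_lt_x y ltac:(lra)).
    assert (-y <= sin y).
    { destruct (Rle_dec y 1).
      - pose proof PI2_1. pose proof (sin_ge_0 y Hy ltac:(lra)). lra.
      - pose proof (SIN_bound y). lra. }
    nra. }
  intros y. destruct (Rle_dec 0 y); [auto|].
  rewrite <- (Ropp_involutive y), sin_neg.
  pose proof (Hpos (-y) ltac:(lra)). nra.
Qed.

Lemma one_minus_cos : forall x, 1 - cos x <= x * x / 2.
Proof.
  intros x. replace x with (2 * (x/2)) at 1 by field.
  rewrite cos_2a_sin. pose proof (sin_sq (x/2)). nra.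
Qed.

Lemma mulL_lt : forall x y, x < y -> x * ln 2 < y * ln 2.
Proof. intros. apply Rmult_lt_compat_r; [apply Lpos|assumption]. Qed.

Lemma hdist_sym : forall p q, hdist p q = hdist q p.
Proof.
  intros [r1 t1] [r2 t2]. unfold hdist; simpl.
  replace (t2 - t1) with (- (t1 - t2)) by ring. rewrite cos_neg.
  f_equal. ring.
Qed.

Lemma hdist_le : forall Rad c, 1 <= c -> 2 * c <= exp Rad -> arcosh c <= Rad.
Proof.
  intros Rad c H1 H2. unfold arcosh.
  assert (Hs : sqrt (c * c - 1) <= c).
  { assert (Hq : sqrt (c*c-1) <= sqrt (c*c)) by (apply sqrt_le_1_alt; lra).
    rewrite sqrt_square in Hq by lra. exact Hq. }
  pose proof (sqrt_pos (c*c-1)).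
  rewrite <- (ln_exp Rad).
  assert (Hle : c + sqrt (c*c-1) <= exp Rad) by lra.
  destruct (Rle_lt_or_eq_dec _ _ Hle) as [Hl|He].
  - left. apply ln_increasing; lra.
  - rewrite He. lra.
Qed.

Lemma key_bound : forall Rad r1 r2 t1 t2 Ii Fr n,
  1000 <= Rad -> 0 <= r1 -> 0 <= r2 ->
  r1 < Rad - 2 * Ii * ln 2 -> r2 < Rad ->
  Rad - 2 * (Ii + 1) * ln 2 <= r1 -> Rad - 2 * (Ii + 1) * ln 2 <= r2 ->
  Ii * ln 2 < 0.45 * Rad + ln 2 ->
  Fr * ln 2 > Rad / 2 - ln 2 ->
  n = exp ((4 - Ii + Fr) * ln 2) ->
  Rabs (t1 - t2) <= 2 * PI / n ->
  hdist (r1, t1) (r2, t2) <= Rad.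
Proof.
  intros Rad r1 r2 t1 t2 Ii Fr n HR Hr1 Hr2 Hr1u Hr2u Hr1l Hr2l HI HF Hn Ht.
  pose proof Lpos as HL.
  set (a := exp r1). set (b := exp r2). set (C := cos (t1 - t2)).
  assert (Ha : 1 <= a) by (pose proof (exp_ineq1_le r1); unfold a; lra).
  assert (Hb : 1 <= b) by (pose proof (exp_ineq1_le r2); unfold b; lra).
  pose proof (COS_bound (t1 - t2)) as HC. fold C in HC.
  assert (HC1 : 1 - C <= (t1-t2)*(t1-t2)/2) by apply one_minus_cos.
  assert (Hnpos : 0 < n) by (rewrite Hn; apply exp_pos).
  set (w := 2 * PI / n).
  assert (Hd2 : (t1-t2)*(t1-t2) <= w * w).
  { fold w in Ht. pose proof (Rle_abs (t1 - t2)). pose proof (Rle_abs (-(t1 - t2))).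
    rewrite Rabs_Ropp in *. nra. }
  assert (HPI : PI <= 4) by apply PI_4. pose proof PI_RGT_0.
  assert (E6 : exp (6 * ln 2) = 64).
  { replace (6 * ln 2) with (ln 2 + ln 2 + ln 2 + ln 2 + ln 2 + ln 2) by ring.
    rewrite !exp_plus, exp_L. ring. }
  assert (E4 : exp (4 * ln 2) = 16).
  { replace (4 * ln 2) with (ln 2 + ln 2 + ln 2 + ln 2) by ring.
    rewrite !exp_plus, exp_L. ring. }
  set (E := exp Rad). set (X9 := exp (0.9 * Rad)). set (X1 := exp (0.1 * Rad)).
  assert (HE : E = X9 * X1) by (unfold E, X9, X1; rewrite <- exp_plus; f_equal; lra).
  assert (HX1 : 64 <= X1) by (pose proof (exp_ineq1_le (0.1 * Rad)); unfold X1; lra).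
  assert (HX9 : 0 < X9) by apply exp_pos.
  assert (Hab : a * b / (n * n) <= E / 64).
  { assert (Heq : a * b / (n * n) = exp (r1 + r2 - 2 * ((4 - Ii + Fr) * ln 2))).
    { unfold a, b. rewrite Hn.
      replace (2 * ((4 - Ii + Fr) * ln 2)) with ((4 - Ii + Fr) * ln 2 + (4 - Ii + Fr) * ln 2) by ring.
      set (K := (4 - Ii + Fr) * ln 2). unfold Rminus. rewrite !exp_plus, exp_Ropp, exp_plus. field. apply Rgt_not_eq, exp_pos. }
    rewrite Heq.
    assert (Heq2 : E / 64 = exp (Rad - 6 * ln 2)).
    { unfold E, Rminus. rewrite exp_plus, exp_Ropp, E6. field. }
    rewrite Heq2. left. apply exp_increasing. lra. }
  assert (Habw : a * b * (w * w) <= E).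
  { assert (Hw : a * b * (w * w) = 4 * PI * PI * (a * b / (n * n))) by (unfold w; field; lra).
    rewrite Hw. assert (0 <= a * b / (n * n)).
    { apply Rmult_le_pos; [nra|]. left. apply Rinv_0_lt_compat. nra. }
    assert (PI * PI <= 16) by nra. nra. }
  assert (Hq1 : a / b <= 16 * X9).
  { assert (Heq : a / b = exp (r1 - r2)).
    { unfold a, b, Rminus. rewrite exp_plus, exp_Ropp. reflexivity. }
    rewrite Heq. replace (16 * X9) with (exp (0.9 * Rad + 4 * ln 2)).
    - left. apply exp_increasing. lra.
    - rewrite exp_plus, E4. unfold X9. ring. }
  assert (Hq2 : b / a <= 16 * X9).
  { assert (Heq : b / a = exp (r2 - r1)).
    { unfold a, b, Rminus. rewrite exp_plus, exp_Ropp. reflexivity. }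
    rewrite Heq. replace (16 * X9) with (exp (0.9 * Rad + 4 * ln 2)).
    - left. apply exp_increasing. lra.
    - rewrite exp_plus, E4. unfold X9. ring. }
  assert (Hid : cosh r1 * cosh r2 - sinh r1 * sinh r2 * C =
     ((a * b + / (a * b)) * (1 - C) + (a / b + b / a) * (1 + C)) / 4).
  { unfold cosh, sinh. rewrite !exp_Ropp. fold a b. field. lra. }
  assert (Hpos : forall x, 0 < x -> 2 <= x + / x).
  { intros x Hx. assert (E1 : x + / x - 2 = (x-1)*(x-1) * / x) by (field; lra).
    assert (0 < / x) by (apply Rinv_0_lt_compat; lra).
    assert (0 <= (x-1)*(x-1) * / x) by (apply Rmult_le_pos; [apply Rle_0_sqr | lra]). lra. }
  assert (Hab1 : 1 <= a * b) by nra.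
  assert (Hiab : / (a * b) <= a * b).
  { assert (/ (a*b) <= 1). { rewrite <- Rinv_1. apply Rinv_le_contravar; lra. } lra. }
  assert (Hba : b / a = / (a / b)) by (field; lra).
  assert (Hdiv : 0 < a / b) by (unfold Rdiv; apply Rmult_lt_0_compat; [lra|apply Rinv_0_lt_compat; lra]).
  pose proof (Hpos (a * b) ltac:(lra)). pose proof (Hpos (a / b) Hdiv).
  unfold hdist; simpl. apply hdist_le; fold C; rewrite Hid.
  - rewrite Hba. nra.
  - fold E. assert (T1 : (a * b + / (a * b)) * (1 - C) <= E).
    { assert (0 <= 1 - C) by lra.
      apply Rle_trans with (2 * (a * b) * (1 - C)); [nra|].
      apply Rle_trans with (a * b * (w * w)); [nra|exact Habw]. }
    assert (T2 : (a / b + b / a) * (1 + C) <= 64 * X9) by nra.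
    nra.
Qed.


Definition Fz (Rad : R) : Z := floorR (Rad / (2 * ln 2)).

Lemma y_fact : forall Rad, 0.9 * Rad / (2 * ln 2) = 0.9 * (Rad / (2 * ln 2)).
Proof. intros. pose proof Lpos. field. lra. Qed.

Lemma yL : forall Rad, Rad / (2 * ln 2) * ln 2 = Rad / 2.
Proof. intros. pose proof Lpos. field. lra. Qed.

Lemma F_bound : forall Rad, IZR (Fz Rad) > Rad / (2 * ln 2) - 1.
Proof. intros. unfold Fz, floorR. pose proof (base_Int_part (Rad / (2 * ln 2))). lra. Qed.

Lemma FL_bound : forall Rad, IZR (Fz Rad) * ln 2 > Rad / 2 - ln 2.
Proof.
  intros. pose proof (F_bound Rad). pose proof Lpos.
  pose proof (mulL_lt _ _ H). rewrite Rmult_minus_distr_r, yL in H1. lra.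
Qed.

Lemma i_bound : forall Rad i, (Z.of_nat i <= i_max Rad)%Z ->
  INR i < 0.9 * (Rad / (2 * ln 2)) + 1.
Proof.
  intros Rad i H. unfold i_max, ceilR in H.
  apply IZR_le in H. rewrite <- INR_IZR_INZ, opp_IZR in H.
  pose proof (base_Int_part (- (0.9 * Rad / (2 * ln 2)))).
  rewrite <- y_fact. lra.
Qed.

Lemma iL_bound : forall Rad i, (Z.of_nat i <= i_max Rad)%Z ->
  INR i * ln 2 < 0.45 * Rad + ln 2.
Proof.
  intros Rad i H. pose proof (mulL_lt _ _ (i_bound Rad i H)).
  rewrite Rmult_plus_distr_r, Rmult_assoc, yL in H0. lra.
Qed.

Lemma n_exp : forall Rad i, n_i Rad i = exp ((4 - INR i + IZR (Fz Rad)) * ln 2).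
Proof.
  intros. unfold n_i. rewrite powerRZ_Rpower by lra. unfold Rpower, Fz. f_equal. f_equal.
  rewrite plus_IZR, minus_IZR, <- INR_IZR_INZ. reflexivity.
Qed.

Lemma n_pos : forall Rad i, 0 < n_i Rad i.
Proof. intros. rewrite n_exp. apply exp_pos. Qed.

Lemma n_shift : forall Rad i d, n_i Rad i = n_i Rad (i + d) * 2 ^ d.
Proof.
  intros. rewrite !n_exp. rewrite <- (Rpower_pow d 2) by lra. unfold Rpower.
  rewrite <- exp_plus. f_equal. rewrite plus_INR. ring.
Qed.

Lemma n_int : forall Rad i, 1000 <= Rad -> (Z.of_nat i <= i_max Rad)%Z ->
  exists k : nat, n_i Rad i = INR k.
Proof.
  intros Rad i HR Hi. pose proof (i_bound Rad i Hi). pose proof (F_bound Rad).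
  pose proof Lpos.
  assert (Hy : 0 < Rad / (2 * ln 2)) by (apply Rdiv_lt_0_compat; lra).
  set (e := (4 - Z.of_nat i + floorR (Rad / (2 * ln 2)))%Z).
  assert (He : (0 <= e)%Z).
  { apply le_IZR. unfold e. rewrite plus_IZR, minus_IZR, <- INR_IZR_INZ. unfold Fz in H0. lra. }
  exists (2 ^ Z.to_nat e)%nat. unfold n_i. fold e.
  rewrite <- (Z2Nat.id e He) at 1. rewrite <- pow_powerRZ, pow_INR. reflexivity.
Qed.

Lemma sec_le : forall x y n, x <= y -> 0 < n -> 2 * PI * x / n <= 2 * PI * y / n.
Proof.
  intros. pose proof PI_RGT_0. unfold Rdiv. apply Rmult_le_compat_r.
  - left. apply Rinv_0_lt_compat. lra.
  - nra.
Qed.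

Lemma INR2j : forall j, INR (2 * j) = 2 * INR j.
Proof. intros. rewrite mult_INR. simpl. ring. Qed.

Lemma INR2j1 : forall j, INR (2 * j + 1) = 2 * INR j + 1.
Proof. intros. rewrite plus_INR, mult_INR. simpl. ring. Qed.

Lemma sector_split : forall Rad i j i'' j'', (i'' <= i)%nat ->
  (forall q, in_tile Rad i'' j'' q -> in_sector Rad (S i) j q) ->
  (forall q, in_tile Rad i'' j'' q -> in_sector Rad i (2*j) q) \/
  (forall q, in_tile Rad i'' j'' q -> in_sector Rad i (2*j+1) q).
Proof.
  intros Rad i j i'' j'' Hle Hs.
  set (d := (i - i'')%nat).
  assert (Hn'' : n_i Rad i'' = n_i Rad i * 2 ^ d).
  { rewrite (n_shift Rad i'' d). unfold d. f_equal. f_equal. lia. }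
  assert (Hn : n_i Rad i = n_i Rad (S i) * 2).
  { rewrite (n_shift Rad i 1). rewrite Nat.add_1_r. simpl. ring. }
  pose proof (n_pos Rad i) as Hp. pose proof (n_pos Rad (S i)) as Hp1.
  assert (Hd : 0 < 2 ^ d) by (apply pow_lt; lra).
  pose proof PI_RGT_0.
  set (K := ((2 * j + 1) * 2 ^ d)%nat).
  assert (HK : 2 * PI * INR K / n_i Rad i'' = 2 * PI * INR (2*j+1) / n_i Rad i).
  { unfold K. rewrite mult_INR, pow_INR, Hn''. replace (INR 2) with 2 by (simpl; ring). field. split; lra. }
  assert (Hj1 : 2 * PI * (INR j + 1) / n_i Rad (S i) = 2 * PI * (INR (2*j+1) + 1) / n_i Rad i).
  { rewrite Hn, INR2j1. field. lra. }
  assert (Hj0 : 2 * PI * INR j / n_i Rad (S i) = 2 * PI * INR (2*j) / n_i Rad i).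
  { rewrite Hn, INR2j. field. lra. }
  destruct (le_lt_dec K j'') as [HKj|HKj].
  - right. intros q Hq. pose proof (Hs q Hq) as [A B]. destruct Hq as [_ [_ [C D]]].
    split.
    + rewrite <- HK. eapply Rle_lt_trans; [|exact C]. apply sec_le; [apply le_INR; exact HKj|apply n_pos].
    + rewrite <- Hj1. exact B.
  - left. intros q Hq. pose proof (Hs q Hq) as [A B]. destruct Hq as [_ [_ [C D]]].
    split.
    + rewrite <- Hj0. exact A.
    + replace (INR (2*j) + 1) with (INR (2*j+1)) by (rewrite INR2j, INR2j1; ring).
      rewrite <- HK.
      eapply Rle_trans; [exact D|]. apply sec_le; [|apply n_pos].
      rewrite <- S_INR. apply le_INR. lia.
Qed.

Lemma same_tile : forall Rad i j j'' p, in_tile Rad i j'' p ->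
  (forall q, in_tile Rad i j'' q -> in_sector Rad i j q) -> in_tile Rad i j p.
Proof.
  intros Rad i j j'' p H Hs. pose proof (Hs p H) as Hp. destruct H as [A [B _]].
  exact (conj A (conj B Hp)).
Qed.

Lemma below_decomp : forall Rad i j p, in_below Rad (S i) j p ->
  in_tile Rad (S i) j p \/ in_below Rad i (2*j) p \/ in_below Rad i (2*j+1) p.
Proof.
  intros Rad i j p [i'' [j'' [[Hle [Had Hs]] Ht]]].
  destruct (Nat.eq_dec i'' (S i)) as [->|Hne].
  - left. exact (same_tile _ _ _ _ _ Ht Hs).
  - right. destruct (sector_split Rad i j i'' j'' ltac:(lia) Hs) as [H1|H1]; [left|right];
      exists i'', j''; (split; [split; [lia|split; assumption]|exact Ht]).
Qed.

Lemma sec_eq0 : forall Rad i j,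
  2 * PI * INR j / n_i Rad (S i) = 2 * PI * INR (2*j) / n_i Rad i.
Proof.
  intros. rewrite (n_shift Rad i 1), Nat.add_1_r, INR2j. pose proof (n_pos Rad (S i)).
  simpl. field. lra.
Qed.

Lemma sec_eq1 : forall Rad i j,
  2 * PI * (INR j + 1) / n_i Rad (S i) = 2 * PI * (INR (2*j+1) + 1) / n_i Rad i.
Proof.
  intros. rewrite INR2j1, (n_shift Rad i 1), Nat.add_1_r. pose proof (n_pos Rad (S i)).
  simpl. field. lra.
Qed.

Lemma child_sector0 : forall Rad i j q, in_sector Rad i (2*j) q -> in_sector Rad (S i) j q.
Proof.
  intros Rad i j q [A B]. unfold in_sector. rewrite sec_eq0, sec_eq1. split; [exact A|].
  eapply Rle_trans; [exact B|]. apply sec_le; [|apply n_pos].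
  rewrite INR2j, INR2j1. lra.
Qed.

Lemma child_sector1 : forall Rad i j q, in_sector Rad i (2*j+1) q -> in_sector Rad (S i) j q.
Proof.
  intros Rad i j q [A B]. unfold in_sector. rewrite sec_eq0, sec_eq1. split; [|exact B].
  eapply Rle_lt_trans; [|exact A]. apply sec_le; [|apply n_pos].
  rewrite INR2j, INR2j1. lra.
Qed.

Lemma child_below : forall Rad i j p,
  in_below Rad i (2*j) p \/ in_below Rad i (2*j+1) p -> in_below Rad (S i) j p.
Proof.
  intros Rad i j p [[i'' [j'' [[Hle [Had Hs]] Ht]]]|[i'' [j'' [[Hle [Had Hs]] Ht]]]];
    exists i'', j''; (split; [split; [lia|split; [exact Had|]]|exact Ht]);
    intros q Hq; [apply child_sector0|apply child_sector1]; apply Hs; exact Hq.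
Qed.

Lemma tile_below : forall Rad i j p, admissible Rad i j -> in_tile Rad i j p -> in_below Rad i j p.
Proof.
  intros Rad i j p Ha Ht. exists i, j. split; [|exact Ht].
  split; [lia|split; [exact Ha|]]. intros q [_ [_ Hq]]. exact Hq.
Qed.

Lemma below_r : forall Rad i j p, in_below Rad i j p ->
  Rad - 2 * (INR i + 1) * ln 2 <= fst p /\ in_disk Rad p /\ in_sector Rad i j p.
Proof.
  intros Rad i j p [i'' [j'' [[Hle [Had Hs]] Ht]]].
  pose proof (Hs p Ht). destruct Ht as [A [[B _] _]].
  pose proof (le_INR _ _ Hle). pose proof Lpos.
  split; [nra|split; assumption].
Qed.

Lemma disj_tile_child : forall Rad i j j' p, in_tile Rad (S i) j p -> in_below Rad i j' p -> False.
Proof.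
  intros Rad i j j' p [_ [[_ B] _]] H. apply below_r in H. destruct H as [H _].
  rewrite S_INR in B. lra.
Qed.

Lemma disj_children : forall Rad i j p,
  in_below Rad i (2*j) p -> in_below Rad i (2*j+1) p -> False.
Proof.
  intros Rad i j p H1 H2. apply below_r in H1. apply below_r in H2.
  destruct H1 as [_ [_ [_ B]]]. destruct H2 as [_ [_ [A _]]].
  rewrite INR2j1 in A. rewrite INR2j in B.
  replace (2 * INR j + 1) with (2 * INR j + 1) in A by reflexivity. lra.
Qed.

Lemma base_below : forall Rad j p, in_below Rad 0 j p -> in_tile Rad 0 j p.
Proof.
  intros Rad j p [i'' [j'' [[Hle [Had Hs]] Ht]]].
  assert (i'' = 0%nat) by lia. subst. exact (same_tile _ _ _ _ _ Ht Hs).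
Qed.

Lemma child_adm : forall Rad i j, 1000 <= Rad -> admissible Rad (S i) j ->
  admissible Rad i (2*j) /\ admissible Rad i (2*j+1).
Proof.
  intros Rad i j HR [Hi Hj].
  destruct (n_int Rad (S i) HR Hi) as [k Hk].
  assert (Hn : n_i Rad i = n_i Rad (S i) * 2).
  { rewrite (n_shift Rad i 1). rewrite Nat.add_1_r. simpl. ring. }
  rewrite Hk in Hj. apply INR_lt in Hj.
  assert (Hi' : (Z.of_nat i <= i_max Rad)%Z) by lia.
  split; split; try exact Hi'; rewrite Hn, Hk;
    replace (INR k * 2) with (INR (2 * k)) by (rewrite mult_INR; simpl; ring);
    apply lt_INR; lia.
Qed.

Lemma hub : forall Rad i j p q, 1000 <= Rad -> admissible Rad i j ->
  in_tile Rad i j p -> in_below Rad i j q -> hdist p q <= Rad /\ hdist q p <= Rad.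
Proof.
  intros Rad i j [r1 t1] [r2 t2] HR Ha Hp Hq.
  assert (H : hdist (r1, t1) (r2, t2) <= Rad).
  { apply below_r in Hq. destruct Hq as [Hq1 [[Hq2 _] [Hq3 Hq4]]].
    destruct Hp as [[Hp1 _] [[Hp2 Hp3] [Hp4 Hp5]]]. simpl in *.
    pose proof (n_pos Rad i).
    apply (key_bound Rad r1 r2 t1 t2 (INR i) (IZR (Fz Rad)) (n_i Rad i)); try lra.
    - apply iL_bound. apply Ha.
    - apply FL_bound.
    - apply n_exp.
    - apply Rabs_le.
      assert (Hw : 2 * PI * (INR j + 1) / n_i Rad i - 2 * PI * INR j / n_i Rad i = 2 * PI / n_i Rad i)
        by (field; lra).
      lra. }
  split; [exact H|rewrite hdist_sym; exact H].
Qed.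

Lemma leb_iff : forall x y : R, Defs.leb x y = true <-> x <= y.
Proof. intros. unfold Defs.leb. destruct (Rle_dec x y); split; intros; try discriminate; auto; contradiction. Qed.
Lemma ltb_iff : forall x y : R, Defs.ltb x y = true <-> x < y.
Proof. intros. unfold Defs.ltb. destruct (Rlt_dec x y); split; intros; try discriminate; auto; contradiction. Qed.
Lemma eqbR_iff : forall x y : R, eqbR x y = true <-> x = y.
Proof. intros. unfold eqbR. destruct (Req_EM_T x y); split; intros; try discriminate; auto; contradiction. Qed.

Lemma in_tile_b_iff : forall Rad i j p, in_tile_b Rad i j p = true <-> in_tile Rad i j p.
Proof.
  intros. unfold in_tile_b, in_tile, in_disk, in_sector.
  rewrite !Bool.andb_true_iff, Bool.implb_true_iff, !leb_iff, !ltb_iff, !eqbR_iff.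
  tauto.
Qed.


Definition decb (P : Prop) : bool := if excluded_middle_informative P then true else false.
Lemma decb_iff : forall P, decb P = true <-> P.
Proof. intros. unfold decb. destruct (excluded_middle_informative P); split; intros; auto; try discriminate; contradiction. Qed.

Lemma Dem_nonneg : forall Rad V i j, (0 <= Dem Rad V i j)%Z.
Proof.
  intros Rad V i j. destruct i as [|i]; simpl.
  - unfold Ncount. destruct (_ || _)%bool; lia.
  - lia.
Qed.

Lemma Ncount_W : forall Rad V i j W, NoDup V -> admissible Rad i j -> W_below Rad V i j W ->
  Ncount Rad V i j = Z.of_nat (length (filter (in_tile_b Rad i j) W)).
Proof.
  intros Rad V i j W HV Ha [Hnd Hin]. unfold Ncount. f_equal. apply Permutation_length.
  apply NoDup_Permutation.
  - apply NoDup_filter. exact HV.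
  - apply NoDup_filter. exact Hnd.
  - intros x. rewrite !filter_In, in_tile_b_iff. split; intros [Hx Ht]; split; auto.
    + apply Hin. split; [exact Hx|]. apply tile_below; assumption.
    + apply Hin in Hx. tauto.
Qed.

Definition C1 Rad V i j W := exists k : nat, (Z.of_nat k <= Dem Rad V i j + 1)%Z /\ covered_by (adjG Rad) W k.
Definition C2 Rad V i j W := (0 < i)%nat -> Dem Rad V i j = 0%Z ->
       exists c : list pt,
         Permutation c W /\ is_cycle (adjG Rad) c /\
         exists k, (k < length c)%nat /\
           in_tile Rad i j (nth k c (0, 0)) /\
           in_tile Rad i j (nth ((k + 1) mod length c) c (0, 0)).

Lemma cover_perm : forall Rad W W' k, Permutation W W' -> covered_by (adjG Rad) W k -> covered_by (adjG Rad) W' k.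
Proof.
  intros Rad W W' k Hp [parts [H1 [H2 H3]]]. exists parts. split; [exact H1|split; [|exact H3]].
  eapply Permutation_trans; eassumption.
Qed.

Lemma base_case : forall Rad V j W, 1000 <= Rad -> NoDup V -> admissible Rad 0 j ->
  W_below Rad V 0 j W -> C1 Rad V 0 j W.
Proof.
  intros Rad V j W HR HV Ha HW.
  pose proof (Ncount_W Rad V 0 j W HV Ha HW) as HN.
  destruct HW as [Hnd Hin].
  assert (Hall : forall x, In x W -> in_tile Rad 0 j x).
  { intros x Hx. apply Hin in Hx. apply base_below. tauto. }
  assert (Hf : filter (in_tile_b Rad 0 j) W = W).
  { clear - Hall. induction W as [|a W IH]; [reflexivity|]. simpl.
    assert (in_tile_b Rad 0 j a = true) by (apply in_tile_b_iff; apply Hall; left; reflexivity).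
    rewrite H. f_equal. apply IH. intros x Hx. apply Hall. right. exact Hx. }
  rewrite Hf in HN.
  assert (Hm := merge (fun p q => hdist p q <= Rad) W [] ltac:(rewrite app_nil_r; exact Hnd)
     (Forall_nil _) ltac:(intros x y Hx Hy; rewrite app_nil_r in Hy;
        apply (hub Rad 0 j x y HR Ha (Hall x Hx)); apply Hin in Hy; tauto)).
  destruct Hm as [[k [Hk1 [Hk2 Hk3]]] _].
  rewrite app_nil_r in Hk1.
  exists k. split; [|exact Hk1].
  simpl Dem. rewrite HN. simpl length in Hk2, Hk3.
  set (N := length W) in *.
  destruct (Z.eqb_spec (Z.of_nat N) 1); destruct (Z.eqb_spec (Z.of_nat N) 2); simpl; lia.
Qed.

Lemma step_case : forall Rad V i j W, 1000 <= Rad -> NoDup V -> admissible Rad (S i) j ->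
  W_below Rad V (S i) j W ->
  (forall j' W', admissible Rad i j' -> W_below Rad V i j' W' -> C1 Rad V i j' W') ->
  C1 Rad V (S i) j W /\ C2 Rad V (S i) j W.
Proof.
  intros Rad V i j W HR HV Ha HW IH.
  pose proof (Ncount_W Rad V (S i) j W HV Ha HW) as HN.
  destruct (child_adm Rad i j HR Ha) as [Ha0 Ha1].
  destruct HW as [Hnd Hin].
  set (T := filter (in_tile_b Rad (S i) j) W).
  set (Wa := filter (fun p => decb (in_below Rad i (2*j) p)) W).
  set (Wb := filter (fun p => decb (in_below Rad i (2*j+1) p)) W).
  assert (HWa : W_below Rad V i (2*j) Wa).
  { split; [apply NoDup_filter; exact Hnd|]. intros p. unfold Wa. rewrite filter_In, decb_iff, Hin.
    split; [tauto|]. intros [H1 H2]. split; [split; [exact H1|]|exact H2].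
    apply child_below. left. exact H2. }
  assert (HWb : W_below Rad V i (2*j+1) Wb).
  { split; [apply NoDup_filter; exact Hnd|]. intros p. unfold Wb. rewrite filter_In, decb_iff, Hin.
    split; [tauto|]. intros [H1 H2]. split; [split; [exact H1|]|exact H2].
    apply child_below. right. exact H2. }
  destruct (IH _ _ Ha0 HWa) as [ka [Hka [Pa [HPa1 [HPa2 HPa3]]]]].
  destruct (IH _ _ Ha1 HWb) as [kb [Hkb [Pb [HPb1 [HPb2 HPb3]]]]].
  assert (HP : Permutation (T ++ Wa ++ Wb) W).
  { apply NoDup_Permutation.
    - apply NoDup_app; [apply NoDup_filter; exact Hnd| |].
      + apply NoDup_app; [apply NoDup_filter; exact Hnd|apply NoDup_filter; exact Hnd|].
        intros a Ha' Hb'. unfold Wa, Wb in *. rewrite filter_In, decb_iff in Ha', Hb'.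
        exact (disj_children Rad i j a (proj2 Ha') (proj2 Hb')).
      + intros a Ht Hab. unfold T in Ht. rewrite filter_In, in_tile_b_iff in Ht.
        apply in_app_iff in Hab. unfold Wa, Wb in Hab. rewrite !filter_In, !decb_iff in Hab.
        destruct Hab as [[_ Hb']|[_ Hb']]; exact (disj_tile_child _ _ _ _ _ (proj2 Ht) Hb').
    - exact Hnd.
    - intros x. rewrite !in_app_iff. unfold T, Wa, Wb. rewrite !filter_In, !decb_iff, in_tile_b_iff.
      split; [intros [[H1 _]|[[H1 _]|[H1 _]]]; exact H1|].
      intros Hx. pose proof Hx as Hx'. apply Hin in Hx'. destruct Hx' as [_ Hb].
      destruct (below_decomp _ _ _ _ Hb) as [H|[H|H]]; tauto. }
  set (Ps := Pa ++ Pb).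
  assert (HP2 : Permutation (T ++ concat Ps) W).
  { eapply Permutation_trans; [|exact HP]. apply Permutation_app_head.
    unfold Ps. rewrite concat_app. apply Permutation_app; assumption. }
  assert (HTin : forall x, In x T -> in_tile Rad (S i) j x).
  { intros x Hx. unfold T in Hx. rewrite filter_In, in_tile_b_iff in Hx. tauto. }
  assert (Hm := merge (fun p q => hdist p q <= Rad) T Ps
     (Permutation_NoDup (Permutation_sym HP2) Hnd)
     (proj2 (Forall_app _ _ _) (conj HPa3 HPb3) : Forall (part_ok (adjG Rad)) Ps)
     ltac:(intros x y Hx Hy; apply (hub Rad (S i) j x y HR Ha (HTin x Hx));
        apply (Permutation_in _ HP2) in Hy; apply Hin in Hy; tauto)).
  destruct Hm as [[k [Hk1 [Hk2 Hk3]]] Hc].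
  assert (HlPs : length Ps = (ka + kb)%nat) by (unfold Ps; rewrite length_app; lia).
  assert (HD : Dem Rad V (S i) j = Z.max (Dem Rad V i (2 * j) + Dem Rad V i (2 * j + 1) + 3
                   - Ncount Rad V (S i) j) 0) by reflexivity.
  fold T in HN. rewrite HN in HD.
  pose proof (Dem_nonneg Rad V i (2*j)). pose proof (Dem_nonneg Rad V i (2*j+1)).
  split.
  - exists k. split; [|exact (cover_perm _ _ _ _ HP2 Hk1)].
    rewrite HD. rewrite HlPs in Hk2, Hk3. lia.
  - intros _ HD0. rewrite HD0 in HD.
    destruct (Hc ltac:(rewrite HlPs; lia) ltac:(lia)) as [c [Hc1 [Hc2 [kk [Hk' [HA HB]]]]]].
    exists c. split; [exact (Permutation_trans Hc1 HP2)|]. split; [exact Hc2|].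
    exists kk. split; [exact Hk'|]. split; apply HTin; assumption.
Qed.

Theorem mainTheorem9 :
  exists R0 : R, forall Rad : R, R0 <= Rad ->
  forall V : list pt, NoDup V -> Forall (in_disk Rad) V ->
  forall i j : nat, admissible Rad i j ->
  forall W : list pt, W_below Rad V i j W ->
    (exists k : nat, (Z.of_nat k <= Dem Rad V i j + 1)%Z /\ covered_by (adjG Rad) W k) /\
    ((0 < i)%nat -> Dem Rad V i j = 0%Z ->
       exists c : list pt,
         Permutation c W /\ is_cycle (adjG Rad) c /\
         exists k, (k < length c)%nat /\
           in_tile Rad i j (nth k c (0, 0)) /\
           in_tile Rad i j (nth ((k + 1) mod length c) c (0, 0))).
Proof.
  exists 1000. intros Rad HR V HV _ i.
  assert (Hgen : forall j, admissible Rad i j -> forall W, W_below Rad V i j W ->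
     C1 Rad V i j W /\ C2 Rad V i j W).
  { induction i as [|i IH].
    - intros j Ha W HW. split; [exact (base_case Rad V j W HR HV Ha HW)|].
      intros Hlt; lia.
    - intros j Ha W HW. apply (step_case Rad V i j W HR HV Ha HW).
      intros j' W' Ha' HW'. exact (proj1 (IH j' Ha' W' HW')). }
  intros j Ha W HW. exact (Hgen j Ha W HW).
Qed.
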